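(* Let $R$ be a commutative elementary divisor domain, let $E,\Phi$ be $n\times n$ $d$-matrices, and let $A=P_A^{-1}EQ_A^{-1}$ and $B=P_B^{-1}\Phi Q_B^{-1}$ with $P_A,Q_A,P_B,Q_B\in GL_n(R)$. Then $B$ is a left divisor of $A$ (i.e. $A=BC$ for some $C\in M_n(R)$) if and only if $P_B=LP_A$ for some $L\in\mathbf L(E,\Phi)$.
   Context: Elementary divisor domain: commutative integral domain over which every matrix is equivalent to a $d$-matrix, i.e. a diagonal matrix $\mathrm{diag}(\varphi_1,\dots)$ with $\varphi_i\mid\varphi_{i+1}$. For $n\times n$ $d$-matrices $E,\Phi$: $\mathbf L(E,\Phi)=\{L\in GL_n(R):\ \exists S\in M_n(R),\ LE=\Phi S\}$. *)

(* Defs.v *)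
From mathcomp Require Import all_boot all_algebra.
Set Implicit Arguments. Unset Strict Implicit. Unset Printing Implicit Defensive.
Import GRing.Theory.
Local Open Scope ring_scope.

Definition rdvd (R : comRingType) (a b : R) : Prop := exists c : R, b = c * a.

Definition is_dmx (R : comRingType) (m n : nat) (D : 'M[R]_(m, n)) : Prop :=
  (forall (i : 'I_m) (j : 'I_n), (i : nat) <> j -> D i j = 0) /\
  (forall (i1 i2 : 'I_m) (j1 j2 : 'I_n),
      (i1 : nat) = j1 -> (i2 : nat) = j2 -> (i2 : nat) = i1.+1 ->
      rdvd (D i1 j1) (D i2 j2)).

Definition elementary_divisor_domain (R : idomainType) : Prop :=
  forall (m n : nat) (A : 'M[R]_(m, n)),
    exists (P : 'M[R]_m) (Q : 'M[R]_n) (D : 'M[R]_(m, n)),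
      [/\ P \in unitmx, Q \in unitmx, is_dmx D & P *m A *m Q = D].

Definition Lset (R : idomainType) (n : nat) (E Phi : 'M[R]_n) (L : 'M[R]_n) : Prop :=
  L \in unitmx /\ exists S : 'M[R]_n, L *m E = Phi *m S.

(* Main.v *)
Require Import Defs.
From mathcomp Require Import all_boot all_algebra.
Local Open Scope ring_scope.

Theorem theorem4p2 (R : idomainType) (hR : elementary_divisor_domain R)
  (n : nat) (E Phi PA QA PB QB : 'M[R]_n) :
  is_dmx E -> is_dmx Phi ->
  PA \in unitmx -> QA \in unitmx -> PB \in unitmx -> QB \in unitmx ->
  (exists C : 'M[R]_n,
      invmx PA *m E *m invmx QA = (invmx PB *m Phi *m invmx QB) *m C)
  <-> (exists L : 'M[R]_n, Lset E Phi L /\ PB = L *m PA).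
Proof.
move=> _ _ uPA uQA uPB uQB; split.
  case=> C h.
  have h' : invmx PA *m E = invmx PB *m Phi *m invmx QB *m C *m QA.
    by rewrite -h -mulmxA mulVmx // mulmx1.
  exists (PB *m invmx PA); split; last by rewrite -mulmxA mulVmx // mulmx1.
  split; first by rewrite unitmx_mul uPB unitmx_inv uPA.
  exists (invmx QB *m C *m QA).
  by rewrite -mulmxA h' !mulmxA mulmxV // mul1mx.
case=> L [[uL [S hS]] ->].
have uLP : L *m PA \in unitmx by rewrite unitmx_mul uL uPA.
have hinv : invmx PA = invmx (L *m PA) *m L.
  by rewrite -[invmx PA]mul1mx -(mulVmx uLP) -!mulmxA mulmxV // mulmx1.
exists (QB *m S *m invmx QA).
rewrite hinv -!mulmxA; congr (_ *m _).
by rewrite !mulmxA hS -[Phi *m invmx QB *m QB]mulmxA mulVmx // mulmx1.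
Qed.
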